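(* Let $p=\phi(n)/n$, where $\phi$ is a function with $\phi(n)=o(n)$ and $\phi(n)\to\infty$ as $n\to\infty$. Then the average complexity $\mathbb{T}(n,p)$ of exhaustive search for maximum independent set on $G\sim\mathcal{G}(n,p)$ is subexponential in $n$ and satisfies $$\mathbb{T}(n,p)=O\left(\exp\left(n\cdot\frac{2\ln\phi(n)+\ln^2\phi(n)}{2\phi(n)}\right)\right).$$
   Context: $\mathcal{G}(n,p)$ is the binomial random graph on $n$ vertices in which each of the $\binom{n}{2}$ pairs of vertices is an edge with probability $p$, independently. Exhaustive search processes the vertices in a fixed order $v_1,\dots,v_n$ and builds a binary search tree: a node at level $i$ corresponds to a subset $P\subseteq\{v_1,\dots,v_i\}$, and it has the two children $P\cup\{v_{i+1}\}$ and $P$ at level $i+1$; a node is kept (and expanded) only if its subset is an independent set of $G$. $\mathbb{T}(n,p)$ denotes the expected number of nodes of this search tree when $G\sim\mathcal{G}(n,p)$. *)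

(* Defs.v *)
From HB Require Import structures.
From mathcomp Require Import all_boot all_order all_algebra.
From mathcomp Require Import all_classical all_reals all_analysis.
Set Implicit Arguments. Unset Strict Implicit. Unset Printing Implicit Defensive.
Import Order.TTheory GRing.Theory Num.Theory.
Local Open Scope ring_scope.

(* Potential edges of a graph on vertex set 'I_n: pairs (u,v) with u < v. *)
Definition vpair (n : nat) := {e : 'I_n * 'I_n | (e.1 < e.2)%N}.

Definition graph (n : nat) := {set vpair n}.

Definition gnp_prob (R : realType) (n : nat) (p : R) (E : graph n) : R :=
  p ^+ #|E| * (1 - p) ^+ #|~: E|.

Definition indep (n : nat) (E : graph n) (P : {set 'I_n}) : bool :=
  [forall e in E, ~~ (((val e).1 \in P) && ((val e).2 \in P))].

(* Vertices v_1..v_i, i.e. the ordinals below i. *)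
Definition prefix (n i : nat) : {set 'I_n} := [set v : 'I_n | (v < i)%N].

(* Number of nodes of the exhaustive-search tree for graph E:
   nodes at level i (0 <= i <= n) are the independent subsets of {v_1..v_i}. *)
Definition search_tree_size (n : nat) (E : graph n) : nat :=
  \sum_(i < n.+1) #|[set P : {set 'I_n} | (P \subset prefix n i) && indep E P]|.

Definition T (R : realType) (n : nat) (p : R) : R :=
  \sum_(E : graph n) gnp_prob p E * (search_tree_size E)%:R.

(* Main.v *)
Require Import Defs.
From HB Require Import structures.
From mathcomp Require Import all_boot all_order all_algebra.
From mathcomp Require Import all_classical all_reals all_analysis.
From mathcomp Require Import zify ring lra.
From Stdlib Require Import Lia.
Import Order.TTheory GRing.Theory Num.Theory.
Local Open Scope classical_set_scope.
Local Open Scope ring_scope.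

Set Implicit Arguments. Unset Strict Implicit.
Definition Ain (n : nat) (P : {set 'I_n}) : {set vpair n} :=
  [set e : vpair n | ((val e).1 \in P) && ((val e).2 \in P)]%SET.

Lemma count_Ain (n : nat) (P : {set 'I_n}) :
  (#|Ain P| * 2 + #|P| = #|P| * #|P|)%N.
Proof.
pose X := finset.setX P P.
pose Lt := [set x : 'I_n * 'I_n | (x.1 < x.2)%N]%SET.
pose Gt := [set x : 'I_n * 'I_n | (x.2 < x.1)%N]%SET.
have eL : #|X :&: Lt| = #|Ain P|.
  rewrite -(card_imset _ val_inj); apply: eq_card => x.
  rewrite !inE; apply/andP/imsetP.
    case=> /andP [x1 x2] lt; exists (exist _ x lt) => //.
    by rewrite inE /= x1 x2.
  by case=> e; rewrite inE => /andP [e1 e2] ->; split; [apply/andP|exact: (valP e)].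
have eG : #|(X :\: Lt) :&: Gt| = #|Ain P|.
  pose sw := fun x : 'I_n * 'I_n => (x.2, x.1).
  have swK : involutive sw by case.
  rewrite -eL -(card_preimset _ (inv_inj swK)); apply: eq_card => -[a b].
  rewrite !inE /=; apply/idP/idP.
    by case/andP => /and3P[_ h1 h2] h3; rewrite h1 h2 h3.
  by case/andP=>/andP[h1 h2] h3; rewrite h1 h2 h3 (leq_gtF (ltnW h3)).
have eD : #|(X :\: Lt) :\: Gt| = #|P|.
  have inj : injective (fun x : 'I_n => (x, x)) by move=> x y [].
  rewrite -(card_imset P inj); apply: eq_card => -[a b].
  apply/idP/imsetP.
    rewrite !inE /= => /andP[nlt /andP [nlt2 /andP [aP bP]]].
    move: nlt nlt2; rewrite -!leqNgt => h1 h2.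
    have eab : a = b by apply/val_inj/eqP; rewrite eqn_leq h1 h2.
    by subst b; exists a.
  by case=> x xP [-> ->]; rewrite !inE /= ltnn xP.
have := cardsID Gt (X :\: Lt); have := cardsID Lt X.
rewrite cardsX eL eG eD => <- <-; lia.
Qed.

Section Comb.
Variable R : realType.

Lemma sum_sets_prod (T : finType) (F : T -> bool -> R) :
  \sum_(E : {set T}) \prod_(v : T) F v (v \in E) =
  \prod_(v : T) (F v true + F v false).
Proof.
transitivity (\prod_(v : T) \sum_(b : bool) F v b); last first.
  by apply: eq_bigr => v _; rewrite big_bool.
rewrite bigA_distr_bigA /=; apply/esym.
rewrite (reindex (fun f : {ffun T -> bool} => [set x | f x]%SET)) /=.
  by apply: eq_bigr => f _; apply: eq_bigr => v _; rewrite inE.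
exists (fun E : {set T} => [ffun x => x \in E]) => [f _|E _].
  by apply/ffunP => x; rewrite ffunE inE.
by apply/setP => x; rewrite inE ffunE.
Qed.

Lemma expect_indep (n : nat) (p : R) (P : {set 'I_n}) :
  \sum_(E : graph n) gnp_prob p E * (indep E P)%:R = (1 - p) ^+ #|Ain P|.
Proof.
pose F (v : vpair n) (b : bool) : R :=
  if b then (if v \in Ain P then 0 else p) else 1 - p.
transitivity (\sum_(E : graph n) \prod_(v : vpair n) F v (v \in E)).
  apply: eq_bigr => E _.
  have [iE|niE] := boolP (indep E P).
    rewrite mulr1 /gnp_prob (bigID (mem E)) /=.
    have h1 : \prod_(i in E) F i (i \in E) = p ^+ #|E|.
      rewrite (eq_bigr (fun _ => p)) ?prodr_const // => v vE; rewrite /F vE.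
      have -> : (v \in Ain P) = false => //.
      move/forall_inP: iE => /(_ v vE); rewrite inE.
      by apply: contraNF.
    have h2 : \prod_(i | i \notin E) F i (i \in E) = (1 - p) ^+ #|~: E|.
      rewrite (eq_bigr (fun _ => 1 - p)); last by move=> v /negbTE vE; rewrite /F vE.
      rewrite prodr_const; congr (_ ^+ _).
      by apply: eq_card => v; rewrite !inE.
    by rewrite h1 h2.
  rewrite mulr0; apply/esym/eqP; rewrite prodf_seq_eq0.
  apply/hasP.
  move: niE => /forall_inPn [v vE hv]; exists v; first by rewrite mem_index_enum.
  by rewrite /= /F vE inE; move: hv; rewrite negbK => ->.
rewrite sum_sets_prod.
rewrite (eq_bigr (fun v => if v \in Ain P then 1 - p else 1)); last first.
  by move=> v _; rewrite /F; case: ifP => _; rewrite ?add0r // addrC subrK.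
by rewrite -big_mkcond /= prodr_const.
Qed.


Lemma T_formula (n : nat) (p : R) :
  T n p = \sum_(i < n.+1) \sum_(P : {set 'I_n} | P \subset Defs.prefix n i)
            (1 - p) ^+ #|Ain P|.
Proof.
rewrite /T /search_tree_size.
under eq_bigr do rewrite natr_sum mulr_sumr.
rewrite exchange_big /=; apply: eq_bigr => i _.
transitivity (\sum_(E : graph n) \sum_(P : {set 'I_n} | P \subset Defs.prefix n i)
                gnp_prob p E * (indep E P)%:R).
  apply: eq_bigr => E _; rewrite -mulr_sumr; congr (_ * _).
  rewrite -sum1_card natr_sum.
  rewrite [RHS](eq_bigr (fun P => if indep E P then 1 else 0)); last by move=> P _; case: (indep E P).
  rewrite -big_mkcondr /=; apply: eq_bigl => P; by rewrite inE.
rewrite exchange_big /=; apply: eq_bigr => P _; exact: expect_indep.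
Qed.

Lemma sum_by_card (n : nat) (g : nat -> R) :
  \sum_(P : {set 'I_n}) g #|P| = \sum_(k < n.+1) 'C(n, k)%:R * g k.
Proof.
rewrite (partition_big (fun P : {set 'I_n} => (inord #|P| : 'I_n.+1)) xpredT) //=.
apply: eq_bigr => k _.
have cP (P : {set 'I_n}) : (#|P| < n.+1)%N by rewrite ltnS -[X in (_ <= X)%N](card_ord n) max_card.
rewrite (eq_bigl (fun P : {set 'I_n} => #|P| == k)); last first.
  move=> P /=; apply/eqP/eqP => [<-|h]; first by rewrite inordK.
  by apply: val_inj; rewrite /= inordK.
rewrite (eq_bigr (fun _ => g k)); last by move=> P /eqP ->.
rewrite sumr_const mulr_natl.
have -> : #|[pred P : {set 'I_n} | #|P| == k]| = 'C(n, k).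
  have := card_draws 'I_n k; rewrite card_ord => <-.
  by apply: eq_card => P; rewrite inE.
by [].
Qed.

Lemma T_ge1 (n : nat) (p : R) : 0 <= p <= 1 -> 1 <= T n p.
Proof.
case/andP=> p0 p1; have q0 : 0 <= 1 - p by rewrite subr_ge0.
rewrite T_formula (bigD1 ord0) //= (bigD1 (finset.set0 : {set 'I_n})) ?sub0set //=.
have -> : #|Ain (finset.set0 : {set 'I_n})| = 0%N.
  by have := count_Ain (finset.set0 : {set 'I_n}); rewrite cards0; lia.
rewrite expr0 -addrA lerDl; apply: addr_ge0; apply: sumr_ge0 => *.
  exact: exprn_ge0.
by apply: sumr_ge0 => *; exact: exprn_ge0.
Qed.

Lemma T_le (n : nat) (p : R) : 0 <= p <= 1 ->
  T n p <= n.+1%:R * \sum_(k < n.+1) 'C(n, k)%:R * expR (- (p * (k%:R * (k%:R - 1) / 2))).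
Proof.
case/andP=> p0 p1; have q0 : 0 <= 1 - p by rewrite subr_ge0.
rewrite T_formula.
apply: (@le_trans _ _ (\sum_(i < n.+1) \sum_(P : {set 'I_n}) (1 - p) ^+ #|Ain P|)).
  apply: ler_sum => i _; rewrite big_mkcond /=; apply: ler_sum => P _.
  by case: ifP => // _; exact: exprn_ge0.
rewrite sumr_const card_ord -[X in X <= _]mulr_natl; apply: ler_wpM2l => //.
rewrite -(sum_by_card n (fun k => expR (- (p * (k%:R * (k%:R - 1) / 2))))).
apply: ler_sum => P _.
have ha : (#|Ain P|%:R : R) = #|P|%:R * (#|P|%:R - 1) / 2.
  have := count_Ain P => /(congr1 (fun m => m%:R : R)); rewrite !natrD !natrM => h.
  apply: (@mulIf _ 2) => //; rewrite mulfVK //; lra.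
rewrite -ha; apply: (@le_trans _ _ (expR (- p) ^+ #|Ain P|)).
  apply: lerXn2r; rewrite ?nnegrE ?expR_ge0 //.
  by have := expR_ge1Dx (- p); rewrite addrC.
by rewrite -expRM_natl mulrN mulrC.
Qed.

Lemma succ_pow_le (k : nat) : (k.+1%:R : R) ^+ k <= expR 1 * k%:R ^+ k.
Proof.
case: k => [|k]; first by rewrite !expr0 mulr1 -expR0 ler_expR.
set m := k.+1.
have m0 : (0 : R) < m%:R by rewrite ltr0n.
have h : (m.+1%:R : R) <= m%:R * expR (m%:R^-1).
  apply: le_trans (_ : m%:R * (1 + m%:R^-1) <= _).
    by rewrite mulrDr mulr1 mulfV ?gt_eqF // -natr1.
  by rewrite ler_wpM2l ?ler0n // expR_ge1Dx.
apply: le_trans (_ : (m%:R * expR (m%:R^-1)) ^+ m <= _).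
  by apply: lerXn2r; rewrite ?nnegrE // ?ler0n // mulr_ge0 ?ler0n ?expR_ge0.
by rewrite exprMn -expRM_natl mulfV ?gt_eqF // mulrC.
Qed.

Lemma pow_le_fact (k : nat) : (k%:R : R) ^+ k <= expR k%:R * k`!%:R.
Proof.
elim: k => [|k IH]; first by rewrite expr0 expR0 mul1r.
rewrite exprS factS natrM -natr1 expRD.
apply: le_trans (_ : (k%:R + 1) * (expR 1 * k%:R ^+ k) <= _).
  by apply: ler_wpM2l; [rewrite addr_ge0 ?ler0n | rewrite natr1 succ_pow_le].
have e0 : 0 <= expR (1 : R) by apply: expR_ge0.
apply: le_trans (_ : (k%:R + 1) * (expR 1 * (expR k%:R * k`!%:R)) <= _).
  by apply: ler_wpM2l; [rewrite addr_ge0 ?ler0n | apply: ler_wpM2l].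
by rewrite le_eqVlt; apply/orP; left; apply/eqP; ring.
Qed.


Lemma ffact_le_expn (n k : nat) : (n ^_ k <= n ^ k)%N.
Proof.
elim: k n => [|k IH] n; first by [].
rewrite ffactnS expnS leq_mul //; apply: leq_trans (IH _) _.
case: k {IH} => [|k]; first by [].
by rewrite leq_exp2r // leq_pred.
Qed.

Lemma expR_ln_pow (x : R) (k : nat) : 0 < x -> expR (k%:R * ln x) = x ^+ k.
Proof. by move=> x0; rewrite expRM_natl lnK. Qed.

Lemma binom_le (n k : nat) : (0 < n)%N ->
  ('C(n, k)%:R : R) <= expR (k%:R * (ln n%:R + 1 - ln k%:R)).
Proof.
move=> n0.
case: k => [|k]; first by rewrite bin0 mul0r expR0.
set m := k.+1.
have m0 : (0 : R) < m%:R by rewrite ltr0n.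
have n0' : (0 : R) < n%:R by rewrite ltr0n.
have f0 : (0 : R) < m`!%:R by rewrite ltr0n fact_gt0.
have hC : ('C(n, m)%:R : R) * m`!%:R <= n%:R ^+ m.
  by rewrite -natrM bin_ffact -natrX ler_nat ffact_le_expn.
have -> : m%:R * (ln n%:R + 1 - ln m%:R) = m%:R * ln n%:R + m%:R - m%:R * ln (m%:R : R) by ring.
rewrite expRB expRD !expR_ln_pow //.
rewrite ler_pdivlMr ?exprn_gt0 //.
apply: le_trans (_ : 'C(n, m)%:R * (expR m%:R * m`!%:R) <= _).
  by apply: ler_wpM2l; [rewrite ler0n | apply: pow_le_fact].
rewrite mulrCA mulrC ler_wpM2r ?expR_ge0 //.
Qed.

Lemma xlnx_bound (a c : R) : 0 < c -> c * (a - ln c) <= expR (a - 1).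
Proof.
move=> c0; set y := expR (a - 1) / c.
have y0 : 0 < y by rewrite divr_gt0 ?expR_gt0.
have hy : ln y <= y - 1.
  have h : -1 < y - 1 by lra.
  have e : 1 + (y - 1) = y by ring.
  by have := le_ln1Dx h; rewrite e.
have ly : ln y = a - 1 - ln c by rewrite /y ln_div ?posrE ?expR_gt0 // expRK.
have : a - ln c <= y by lra.
rewrite /y ler_pdivlMr // => h; rewrite mulrC; exact: h.
Qed.

Lemma core (L c p : R) : 0 < p <= 1 -> 0 <= c -> 2 * expR 4 + 20 <= L ->
  c * (1 + L - ln c) - c ^+ 2 / 2 + p * c / 2 + 2 * L + 4 <= L + L ^+ 2 / 2.
Proof.
move=> /andP [p0 p1] c0 hL.
have e4 : 0 < expR (4 : R) by apply: expR_gt0.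
have pc : p * c <= c by rewrite ler_piMl.
suff : c * (3 / 2 - ln c) + 4 + L <= (c - L) ^+ 2 / 2.
  move=> h.
  have -> : c * (1 + L - ln c) = c * (3 / 2 - ln c) + c * L - c / 2 by field.
  lra.
have [cs|cl] := leP c (L / 2).
  have hA : c * (3 / 2 - ln c) <= L / 2.
    have [->|cpos] := eqVneq c 0; first by rewrite mul0r; lra.
    have cp : 0 < c by rewrite lt_neqAle eq_sym cpos c0.
    apply: le_trans (@xlnx_bound (3/2) c cp) _.
    have : expR (3 / 2 - 1 : R) <= expR 4 by rewrite ler_expR; lra.
    lra.
  have hsq : L ^+ 2 / 4 <= (L - c) ^+ 2.
    have : L / 2 <= L - c by lra.
    move=> h; apply: le_trans (_ : (L / 2) ^+ 2 <= _).
      by rewrite le_eqVlt; apply/orP; left; apply/eqP; field.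
    by apply: lerXn2r; rewrite ?nnegrE //; lra.
  have -> : (c - L) ^+ 2 = (L - c) ^+ 2 by ring.
  have L20 : 20 <= L by lra.
  have : 20 * L <= L ^+ 2 by rewrite expr2 ler_wpM2r //; lra.
  lra.
have cp : 0 < c by lra.
have lnc : 4 <= ln c.
  rewrite -[X in X <= _](expRK 4) ler_ln ?posrE //; lra.
have : c * (3 / 2 - ln c) <= c * (- 5 / 2).
  by rewrite ler_pM2l //; lra.
have : 0 <= (c - L) ^+ 2 / 2 by rewrite divr_ge0 ?sqr_ge0.
lra.
Qed.

Lemma exponent_le (n k : nat) (p L : R) : (0 < n)%N -> 0 < p <= 1 ->
  L = ln (p * n%:R) -> 2 * expR 4 + 20 <= L ->
  p * (k%:R * (ln n%:R + 1 - ln k%:R) - p * (k%:R * (k%:R - 1) / 2)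
       + 2 * ln (n.+1%:R)) <= L + L ^+ 2 / 2.
Proof.
move=> n0 /andP [p0 p1] eL hL.
have n0' : (0 : R) < n%:R by rewrite ltr0n.
have e4 : 0 < expR (4 : R) by apply: expR_gt0.
have L0 : 0 <= L by lra.
have eL' : L = ln p + ln n%:R by rewrite eL lnM ?posrE.
have f1 : ln (n.+1%:R : R) <= ln n%:R + 1.
  have e1 : (1 : R) + 1 <= expR 1 by apply: expR_ge1Dx.
  have : (n.+1%:R : R) <= expR 1 * n%:R.
    rewrite -natr1; have : (1 : R) <= n%:R by rewrite ler1n.
    nra.
  rewrite -ler_ln ?posrE ?ltr0n ?mulr_gt0 ?expR_gt0 // lnM ?posrE ?expR_gt0 // expRK.
  lra.
have f2 : p * ln n%:R <= L + 1.
  have := @xlnx_bound 0 p p0; rewrite sub0r.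
  have : expR (0 - 1 : R) <= 1 by rewrite expR_le1; lra.
  have : p * L <= L by rewrite ler_piMl.
  move=> h1 h2 h3; rewrite eL' in h1.
  have -> : p * ln n%:R = p * (ln p + ln n%:R) + p * - ln p by ring.
  lra.
set c := k%:R * p.
have c0 : 0 <= c by rewrite mulr_ge0 ?ler0n // ltW.
have hk : p * (k%:R * (ln n%:R - ln k%:R)) = c * (L - ln c).
  case: k {c0} @c => [|k] c; first by rewrite /c !mul0r mulr0.
  rewrite /c lnM ?posrE ?ltr0n // eL'; ring.
have hc := @core L c p (introT andP (conj p0 p1)) c0 hL.
have e1 : c * (1 + L - ln c) = c + c * (L - ln c) by ring.
rewrite e1 in hc.
have -> : p * (k%:R * (ln n%:R + 1 - ln k%:R) - p * (k%:R * (k%:R - 1) / 2)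
       + 2 * ln (n.+1%:R)) = p * (k%:R * (ln n%:R - ln k%:R)) + c - c ^+ 2 / 2
       + p * c / 2 + 2 * (p * ln (n.+1%:R)) by rewrite /c; field.
rewrite hk.
have : p * ln (n.+1%:R) <= p * ln n%:R + p.
  by rewrite -[X in _ + X]mulr1 -mulrDr ler_wpM2l // ltW.
lra.
Qed.

Lemma T_bound (n : nat) (phi : R) : (0 < n)%N -> 0 < phi <= n%:R ->
  2 * expR 4 + 20 <= ln phi ->
  T n (phi / n%:R) <= expR (n%:R * ((2 * ln phi + ln phi ^+ 2) / (2 * phi))).
Proof.
move=> n0 /andP [f0 fn] hL.
have n0' : (0 : R) < n%:R by rewrite ltr0n.
set p := phi / n%:R.
have p0 : 0 < p by rewrite divr_gt0.
have p1 : p <= 1 by rewrite ler_pdivrMr // mul1r.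
have ephi : phi = p * n%:R by rewrite /p mulfVK ?gt_eqF.
set L := ln phi.
set B := n%:R * ((2 * L + L ^+ 2) / (2 * phi)).
have pB : p * B = L + L ^+ 2 / 2.
  rewrite /B /p; field; rewrite ?gt_eqF //.
have N0 : (0 : R) < n.+1%:R ^+ 2 by rewrite exprn_gt0 // ltr0n.
have term (k : nat) : 'C(n, k)%:R * expR (- (p * (k%:R * (k%:R - 1) / 2)))
    <= expR B / n.+1%:R ^+ 2.
  rewrite ler_pdivlMr // -(@expR_ln_pow (n.+1%:R) 2) ?ltr0n //.
  apply: le_trans (_ : expR (k%:R * (ln n%:R + 1 - ln k%:R)) *
     expR (- (p * (k%:R * (k%:R - 1) / 2))) * expR (2%:R * ln n.+1%:R) <= _).
    by rewrite ler_wpM2r ?expR_ge0 // ler_wpM2r ?expR_ge0 // binom_le.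
  rewrite -!expRD ler_expR -(ler_pM2l p0) pB.
  have := @exponent_le n k p L n0 (introT andP (conj p0 p1)).
  rewrite -ephi => /(_ erefl hL).
  by rewrite (_ : (2%:R : R) = 2) //.
apply: le_trans (T_le _ _) _; first by rewrite ltW.
apply: le_trans (_ : n.+1%:R * \sum_(k < n.+1) expR B / n.+1%:R ^+ 2 <= _).
  by rewrite ler_wpM2l ?ler0n //; apply: ler_sum => k _; apply: term.
rewrite sumr_const card_ord -mulr_natr.
have Np : (n.+1%:R : R) != 0 by rewrite pnatr_eq0.
rewrite le_eqVlt; apply/orP; left; apply/eqP; field; by rewrite addrC natr1.
Qed.
End Comb.

Theorem lemma2 (R : realType) (phi : nat -> R)
  (phi_o : (fun n : nat => phi n / n%:R) @ \oo --> 0%R)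
  (phi_inf : phi @ \oo --> +oo) :
  let p := fun n : nat => phi n / n%:R in
  (* subexponential: ln T(n,p) / n -> 0 *)
  ((fun n : nat => ln (T n (p n)) / n%:R) @ \oo --> 0%R) /\
  (* big-O bound *)
  (exists C : R, \forall n \near \oo,
     T n (p n) <= C * expR (n%:R * ((2 * ln (phi n) + ln (phi n) ^+ 2) / (2 * phi n)))).

Proof.
move=> p.
have h1 := cvgr_lt 0 phi_o 1 ltr01.
have h2 := cvgry_ge phi_inf (expR (2 * expR 4 + 20)).
have h3 := nbhs_infty_gt 0.
have Hev : \forall n \near \oo, [/\ (0 < n)%N, 0 < phi n, phi n <= n%:R &
                                   2 * expR 4 + 20 <= ln (phi n)].
  near=> n.
  have hp : phi n / n%:R < 1 by near: n; exact: h1.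
  have hphi : expR (2 * expR 4 + 20) <= phi n by near: n; exact: h2.
  have n0 : (0 < n)%N by near: n; exact: h3.
  have f0 : 0 < phi n by apply: lt_le_trans hphi; apply: expR_gt0.
  split => //.
    by move: hp; rewrite ltr_pdivrMr ?ltr0n // mul1r => /ltW.
  by rewrite -[X in X <= _]expRK ler_ln ?posrE ?expR_gt0.
  Unshelve. all: end_near.
have HT : \forall n \near \oo, 1 <= T n (p n) <=
    expR (n%:R * ((2 * ln (phi n) + ln (phi n) ^+ 2) / (2 * phi n))).
  apply: filterS Hev => n [n0 f0 fn hL]; apply/andP; split.
    apply: T_ge1; rewrite /p divr_ge0 ?ler0n ?(ltW f0) //=.
    by rewrite ler_pdivrMr ?ltr0n // mul1r.
  exact: (T_bound n0 (introT andP (conj f0 fn)) hL).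
split; last first.
  by exists 1; apply: filterS HT => n /andP [_ h]; rewrite mul1r.
apply: (@squeeze_cvgr _ _ _ _ (fun _ => 0)
          (fun n => (2 * ln (phi n) + ln (phi n) ^+ 2) / (2 * phi n))).
- apply: filterS2 Hev HT => n [n0 f0 fn hL] /andP [T1 TB].
  have n0' : (0 : R) < n%:R by rewrite ltr0n.
  have T0 : 0 < T n (p n) by apply: lt_le_trans T1.
  apply/andP; split; first by rewrite divr_ge0 ?ler0n // ln_ge0.
  rewrite ler_pdivrMr // mulrC.
  by rewrite -[X in _ <= X]expRK ler_ln ?posrE ?expR_gt0.
- by apply/cvgrPdist_le => e e0; apply: nearW => n; rewrite subrr normr0 ltW.
- apply/cvgrPdist_le => e e0.
  have h4 := cvgry_ge phi_inf (expR (1 + 9 / e)).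
  near=> n.
  have hn : expR (1 + 9 / e) <= phi n by near: n; exact: h4.
  have f0 : 0 < phi n by apply: lt_le_trans hn; apply: expR_gt0.
  set L := ln (phi n).
  have hL : 1 + 9 / e <= L by rewrite /L -[X in X <= _]expRK ler_ln ?posrE ?expR_gt0.
  have L1 : 1 <= L.
    have : 0 <= 9 / e by rewrite divr_ge0 // ltW.
    lra.
  have eL : 9 <= e * L.
    have : 9 / e <= L by lra.
    by rewrite ler_pdivrMr // mulrC.
  have ephi : phi n = expR L by rewrite /L lnK.
  have hexp := @expR_ge1Dxn R L 2 (le_trans ler01 L1).
  have f6 : (3`!%:R : R) = 6 by [].
  rewrite f6 -ephi in hexp.
  have hL2 : L <= L ^+ 2 by rewrite expr2 ler_peMl // (le_trans ler01).
  have hL3 : 9 * L ^+ 2 <= e * L ^+ 3.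
    have -> : e * L ^+ 3 = (e * L) * L ^+ 2 by ring.
    by apply: ler_wpM2r => //; rewrite exprn_ge0 // (le_trans ler01).
  have h0 : 0 <= (2 * L + L ^+ 2) / (2 * phi n).
    apply: divr_ge0; last by rewrite mulr_ge0 // ltW.
    by rewrite addr_ge0 ?mulr_ge0 ?exprn_ge0 // (le_trans ler01).
  rewrite sub0r normrN ger0_norm //.
  rewrite ler_pdivrMr ?mulr_gt0 //.
  have : e * (1 + L ^+ 3 / 6) <= e * phi n by rewrite ler_wpM2l // ltW.
  have -> : e * (1 + L ^+ 3 / 6) = e + e * L ^+ 3 / 6 by field.
  move=> h; have : 0 < e * 2 by lra.
  lra.
Unshelve. all: end_near.
Qed.
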